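(* Let $\mathbb{X}$ be a real Banach space such that $\operatorname{Sm}\mathbb{X}$ is a dense $G_\delta$ subset of $\mathbb{X}$. If a bounded linear operator $T:\mathbb{X}\to\mathbb{X}$ preserves Birkhoff–James orthogonality at each point of $\operatorname{Sm}\mathbb{X}$, then $T$ is a scalar multiple of an isometry, i.e. there is $\lambda\ge0$ with $\|Tx\|=\lambda\|x\|$ for all $x\in\mathbb{X}$. (Equivalently, $\operatorname{Sm}\mathbb{X}\cap S_{\mathbb{X}}$ is a $\mathcal{K}$-set.)
   Context: $u\perp_B v$ means $\|u+\lambda v\|\ge\|u\|$ for all real $\lambda$. $T$ preserves Birkhoff–James orthogonality at $x$ if $x\perp_B v$ implies $Tx\perp_B Tv$ for all $v$. For non-zero $z$, $J(z)=\{f\in\mathbb{X}^*:\|f\|=1,\ f(z)=\|z\|\}$; $z$ is smooth if $J(z)$ is a singleton; $\operatorname{Sm}\mathbb{X}$ is the set of smooth points. $S_{\mathbb{X}}$ is the unit sphere. A set $A\subseteq S_{\mathbb{X}}$ is a $\mathcal{K}$-set if every bounded linear $T:\mathbb{X}\to\mathbb{X}$ preserving Birkhoff–James orthogonality at each point of $A$ is a scalar multiple of an isometry. *)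

(* Defs.v *)
From HB Require Import structures.
From mathcomp Require Import all_boot all_order all_algebra.
From mathcomp Require Import all_classical all_reals all_analysis borel_hierarchy.
Set Implicit Arguments. Unset Strict Implicit. Unset Printing Implicit Defensive.
Import Order.TTheory GRing.Theory Num.Theory.
Import numFieldNormedType.Exports.
Local Open Scope classical_set_scope.
Local Open Scope ring_scope.

Section BJ.
Context {R : realType} {X : normedModType R}.

Definition BJorth (u v : X) : Prop := forall lam : R, `|u| <= `|u + lam *: v|.

Definition preserves_BJ_at (T : X -> X) (x : X) : Prop :=
  forall v : X, BJorth x v -> BJorth (T x) (T v).

Definition is_linear_functional (f : X -> R) : Prop :=
  forall (a : R) (x y : X), f (a *: x + y) = a * f x + f y.

Definition dual_norm (f : X -> R) : R :=
  sup [set `|f x| | x in [set x : X | `|x| <= 1]].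

Definition in_dual (f : X -> R) : Prop := is_linear_functional f /\ continuous f.

Definition Jset (z : X) : set (X -> R) :=
  [set f | in_dual f /\ dual_norm f = 1 /\ f z = `|z|].

Definition smooth (z : X) : Prop := z != 0 /\ exists f : X -> R, Jset z = [set f].

Definition Sm : set X := [set z | smooth z].

End BJ.

(* Main.v *)
Require Import Defs.
From HB Require Import structures.
From mathcomp Require Import all_boot all_order all_algebra.
From mathcomp Require Import all_classical all_reals all_analysis borel_hierarchy.
From mathcomp Require Import ring lra.
Import Order.TTheory GRing.Theory Num.Theory.
Import numFieldNormedType.Exports.
Local Open Scope classical_set_scope.
Local Open Scope ring_scope.



Definition goodF (R : realType) (X : normedModType R) (g : X -> R) (x : X) (F : X -> R) : Prop :=
 (forall (a : R) u v, F (a *: u + v) = a * F u + F v) /\ (forall u, F u <= `|u|) /\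
 F x = `|x| /\ (forall u, g x * F u <= `|x| * g u).

Arguments goodF {R X}.

Lemma goodF_add {R : realType} {X : normedModType R} {g : X -> R} {x F} :
  goodF g x F -> forall u v, F (u + v) = F u + F v.
Proof. by case=> lin _ u v; rewrite -[u]scale1r lin mul1r scale1r. Qed.

Lemma goodF_0 {R : realType} {X : normedModType R} {g : X -> R} {x F} :
  goodF g x F -> F 0 = 0.
Proof. move=> h; have := goodF_add h 0 0; rewrite addr0 => e; lra. Qed.

Lemma goodF_opp {R : realType} {X : normedModType R} {g : X -> R} {x F} :
  goodF g x F -> forall u, F (- u) = - F u.
Proof.
move=> h u; have := goodF_add h u (- u); rewrite subrr (goodF_0 h) => e; lra.
Qed.

Lemma goodF_sub {R : realType} {X : normedModType R} {g : X -> R} {x F} :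
  goodF g x F -> forall u v, F (u - v) = F u - F v.
Proof. by move=> h u v; rewrite (goodF_add h) (goodF_opp h). Qed.

Lemma goodF_ge {R : realType} {X : normedModType R} {g : X -> R} {x F} :
  goodF g x F -> forall u, - `|u| <= F u.
Proof.
move=> h u; have [_ [hb _]] := h; have := hb (- u); rewrite normrN (goodF_opp h).
lra.
Qed.



Lemma chain {R : realType} {X : normedModType R} (g : X -> R) (z : nat -> X) (D : X)
  (rho m : R) (n : nat) :
 (forall u, 0 <= g u) -> 0 < m ->
 (forall i, (i <= n.+1)%N -> m <= `|z i|) ->
 (forall i, (i <= n)%N -> exists F, goodF g (z i) F) ->
 (forall i, (i <= n)%N -> `|z i.+1 - z i - D| <= rho) ->
 forall j, (j <= n)%N ->
  0 <= `|z j.+1| - `|z j| - (`|z 1| - `|z 0|) + 2 * j%:R * rho /\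
  g (z 1) / `|z 1| * (1 - (`|z j.+1| - `|z j| - (`|z 1| - `|z 0|) + 2 * j%:R * rho) / m)
    <= g (z j.+1) / `|z j.+1|.
Proof.
move=> g0 m0 hm hF hD; elim=> [|j IH] hj.
  have -> : `|z 1| - `|z 0| - (`|z 1| - `|z 0|) + 2 * 0%:R * rho = 0.
    by rewrite mulr0n mulr0 mul0r addr0 subrr.
  by rewrite mul0r subr0 mulr1; split.
have [B0 IHk] := IH (ltnW hj).
have [F hFg] := hF j.+1 hj.
have [_ [Fle [Fx Fg]]] := hFg.
have mN1 : m <= `|z j.+1| by apply: hm; rewrite ltnW // ltnS.
have mN2 : m <= `|z j.+2| by apply: hm; rewrite ltnS.
have F2 : F (z j.+2) <= `|z j.+2| := Fle _.
have Fj : F (z j) <= `|z j| := Fle _.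
have hp : `|z j.+2 - z j.+1 - D| <= rho := hD _ hj.
have hq : `|z j.+1 - z j - D| <= rho := hD _ (ltnW hj).
have Fpq : - (2 * rho) <= F (z j.+2 - z j.+1 - D - (z j.+1 - z j - D)).
  apply: le_trans (goodF_ge hFg _).
  rewrite lerN2; apply: le_trans (ler_normB _ _) _; lra.
rewrite !(goodF_sub hFg) Fx in Fpq.
move: B0 IHk.
set B := `|z j.+1| - `|z j| - (`|z 1| - `|z 0|) + 2 * j%:R * rho.
set B' := `|z j.+2| - `|z j.+1| - (`|z 1| - `|z 0|) + 2 * j.+1%:R * rho.
have eBB : B' = B + (`|z j.+2| - `|z j.+1| - (`|z j.+1| - `|z j|)) + 2 * rho.
  by rewrite /B' /B -natr1; ring.
move=> B0 IHk.
set Gap := `|z j.+2| - F (z j.+2).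
have G0 : 0 <= Gap by rewrite /Gap; lra.
have GB : B + Gap <= B' by rewrite eBB /Gap; lra.
have N1p : 0 < `|z j.+1| by exact: (lt_le_trans m0 mN1).
have N2p : 0 < `|z j.+2| by exact: (lt_le_trans m0 mN2).
set k0 := g (z 1) / `|z 1|.
set k1 := g (z j.+1) / `|z j.+1|.
set k2 := g (z j.+2) / `|z j.+2|.
have k0p : 0 <= k0 by rewrite /k0 divr_ge0.
have k1p : 0 <= k1 by rewrite /k1 divr_ge0.
have k2p : 0 <= k2 by rewrite /k2 divr_ge0.
have e1 : g (z j.+1) = k1 * `|z j.+1| by rewrite /k1 divfK // gt_eqF.
have e2 : g (z j.+2) = k2 * `|z j.+2| by rewrite /k2 divfK // gt_eqF.
have hk : k1 * F (z j.+2) <= k2 * `|z j.+2|.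
  have := Fg (z j.+2); rewrite e1 e2 => h; rewrite -(ler_pM2l N1p); lra.
split; first by apply: le_trans GB; apply: addr_ge0.
set p := B / m in IHk; set r := B' / m; set q := Gap / m.
have eB : B = p * m by rewrite /p divfK // gt_eqF.
have eB' : B' = r * m by rewrite /r divfK // gt_eqF.
have eG : Gap = q * m by rewrite /q divfK // gt_eqF.
have q0 : 0 <= q by rewrite /q divr_ge0 // ltW.
have p0 : 0 <= p by rewrite /p divr_ge0 // ltW.
have pqr : p + q <= r.
  by rewrite -(ler_pM2r m0) mulrDl -eB -eB' -eG.
have [r1|r1] := leP 1 r.
  apply: le_trans k2p; rewrite mulr_ge0_le0 //; lra.
have h2 : k1 * (1 - q) <= k2.
  have : k1 * (1 - q) * `|z j.+2| <= k2 * `|z j.+2|.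
    have e3 : F (z j.+2) = `|z j.+2| - q * m by rewrite -eG /Gap; lra.
    rewrite e3 in hk.
    have : k1 * q * m <= k1 * q * `|z j.+2|.
      by apply: ler_wpM2l; [rewrite mulr_ge0|].
    nra.
  by rewrite ler_pM2r.
have : k0 * (1 - p) * (1 - q) <= k1 * (1 - q) by apply: ler_wpM2r => //; lra.
have : 0 <= k0 * p * q by do 2 apply: mulr_ge0 => //.
have : k0 * (1 - r) <= k0 * (1 - p - q) by apply: ler_wpM2l => //; lra.
nra.
Qed.



Lemma near_delta {R : realType} {X : normedModType R} (g : X -> R) :
  continuous g -> forall a : X, a != 0 -> forall e : R, 0 < e ->
  exists2 d : R, 0 < d & forall u, `|a - u| < d -> `|g a / `|a| - g u / `|u| | < e.
Proof.
move=> gc a a0 e e0.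
have hc : (fun u => g u / `|u|) @ a --> g a / `|a|.
  apply: (@cvgM _ _ _ _ g (fun u => `|u|^-1)); first exact: gc.
  apply: cvgV; first by rewrite normr_eq0.
  exact: norm_continuous.
have H : \forall t \near a, `|g a / `|a| - g t / `|t| | < e.
  exact: (cvgrPdist_lt _ _).1 hc e e0.
have [d d0 hd] := (nbhs_normP _ _).1 H.
exists d => // u hu; exact: hd.
Qed.

Lemma dense_near {R : realType} {X : normedModType R} (S : set X) :
  dense S -> forall (y : X) (e : R), 0 < e -> exists z, S z /\ `|y - z| < e.
Proof.
move=> hS y e e0.
have [|z [bz sz]] := hS (ball y e) _ (ball_open y e).
  by exists y; exact: ballxx.
by exists z; split => //; move: bz; rewrite -ball_normE.
Qed.

Lemma min_pos2 {R : realType} (x y : R) : 0 < x -> 0 < y ->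
  exists2 z, 0 < z & z <= x /\ z <= y.
Proof.
move=> x0 y0; exists (Order.min x y); first by rewrite lt_min x0 y0.
by rewrite !ge_min !lexx /= ?orbT.
Qed.

Lemma id4 (V : zmodType) (p q r s : V) :
  q - p - (s - r) = (q - s) - (p - r).
Proof. by rewrite !opprB addrACA [RHS]addrACA [- s + _]addrC. Qed.

Lemma local {R : realType} {X : normedModType R} {g : X -> R} {S : set X} :
  dense S -> (forall x, S x -> exists F, goodF g x F) -> (forall u, 0 <= g u) ->
  continuous g ->
  forall (a b : X) (m : R), 0 < m ->
  (forall t : R, 0 <= t -> t <= 1 -> m <= `|a + t *: (b - a)|) ->
  g a / `|a| <= g b / `|b|.
Proof.
move=> hS hSF g0 gc a b m m0 hseg.
have ma : m <= `|a| by have := hseg 0 (lexx _) ler01; rewrite scale0r addr0.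
have mb : m <= `|b| by have := hseg 1 ler01 (lexx _); rewrite scale1r addrC subrK.
have a0 : a != 0 by rewrite -normr_eq0 gt_eqF // (lt_le_trans m0 ma).
have b0 : b != 0 by rewrite -normr_eq0 gt_eqF // (lt_le_trans m0 mb).
set ha := g a / `|a|; set hb := g b / `|b|.
have ha0 : 0 <= ha by rewrite /ha divr_ge0.
apply/ler_addgt0Pr => eps eps0.
have e3 : 0 < eps / 3 by rewrite divr_gt0.
have [da1 da10 hda1] := near_delta _ gc _ a0 _ e3.
have [da2 da20 hda2] := near_delta _ gc _ a0 _ ltr01.
have [db db0 hdb] := near_delta _ gc _ b0 _ e3.
set K := ha + 1.
have K0 : 0 < K by rewrite /K; lra.
set c := eps * m / (6 * K).
have c0 : 0 < c by rewrite /c divr_gt0 ?mulr_gt0 //; lra.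
have h4 : 0 < 4 :> R by [].
have [e0 e00 [e0m e0c]] := min_pos2 (m / 4) (c / 4) (divr_gt0 m0 h4) (divr_gt0 c0 h4).
set n := (Num.Def.archi_bound (`|b - a| / e0)).+1.
have hn : `|b - a| / e0 < n%:R.
  apply: lt_le_trans (archi_boundP _) _; first by rewrite divr_ge0 // ltW.
  by rewrite ler_nat.
have n0 : 0 < n%:R :> R by rewrite ltr0n.
set D := (n%:R)^-1 *: (b - a).
have nD : `|D| < e0.
  rewrite /D normrZ ger0_norm ?invr_ge0 ?ltW //.
  rewrite mulrC ltr_pdivrMr //.
  by move: hn; rewrite ltr_pdivrMr // mulrC.
have h8 : 0 < c / (8 * (n%:R + 1)) by rewrite divr_gt0 // mulr_gt0 //; lra.
have [et1 et10 [et1m et1c]] := min_pos2 (m / 4) (c / (8 * (n%:R + 1))) (divr_gt0 m0 h4) h8.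
have [et2 et20 [et2a et2b]] := min_pos2 da1 da2 da10 da20.
have [et3 et30 [et3a et3b]] := min_pos2 et1 et2 et10 et20.
have [eta eta0 [etaa etab]] := min_pos2 et3 db et30 db0.
have etam : eta <= m / 4 by lra.
have etac : eta * (8 * (n%:R + 1)) <= c.
  by rewrite -ler_pdivlMr ?mulr_gt0 //; lra.
set y := fun i : nat => a + (i%:R - 1) *: D.
have : forall i : nat, exists z, S z /\ `|y i - z| < eta by move=> i; exact: dense_near.
move/boolp.choice => [z hz].
have y1 : y 1%N = a by rewrite /y subrr scale0r addr0.
have yn : y n.+1 = b.
  by rewrite /y -natr1 addrK /D scalerA mulfV ?gt_eqF // scale1r addrC subrK.
have yS : forall i, y i.+1 - y i = D.
  move=> i; rewrite /y -natr1.
  have -> : i%:R + 1 - 1 = (i%:R - 1) + 1 :> R by ring.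
  by rewrite scalerDl scale1r addrA (addrC (a + _)) addrK.
have zy : forall i, `|z i| >= `|y i| - eta.
  move=> i; have [_ hi] := hz i.
  have := ler_normD (y i - z i) (z i); rewrite subrK; lra.
have zm : forall i, (i <= n.+1)%N -> m / 2 <= `|z i|.
  move=> [|i] hi.
    have := zy 0%N; rewrite /y sub0r scaleN1r.
    have := ler_normD (a - D) D; rewrite subrK; lra.
  have := zy i.+1; rewrite /y -natr1 addrK.
  have -> : i%:R *: D = (i%:R / n%:R) *: (b - a) by rewrite /D scalerA.
  have := hseg (i%:R / n%:R) (divr_ge0 (ler0n _ _) (ltW n0)).
  rewrite ler_pdivrMr // mul1r ler_nat => /(_ hi); lra.
have zD : forall i, `|z i.+1 - z i - D| <= 2 * eta.
  move=> i; have [_ h1] := hz i; have [_ h2] := hz i.+1.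
  rewrite -(yS i) id4; apply: le_trans (ler_normB _ _) _.
  rewrite -(normrN (z i.+1 - _)) -(normrN (z i - _)) !opprB; lra.
have hm2 : 0 < m / 2 by rewrite divr_gt0.
have [B0 hch] := @chain R X g z D (2 * eta) (m / 2) n g0 hm2 zm (fun i _ => hSF _ (proj1 (hz i))) (fun i _ => zD i) n (leqnn n).
move: B0 hch.
set B := `|z n.+1| - `|z n| - (`|z 1| - `|z 0|) + 2 * n%:R * (2 * eta).
move=> B0 hch.
have wn : forall i, `|z i.+1 - z i| <= `|D| + 2 * eta.
  move=> i; have := ler_normD (z i.+1 - z i - D) D; rewrite subrK.
  have := zD i; lra.
have Bc : B <= c.
  have h1 := ler_dist_dist (z n.+1) (z n).
  have h2 := ler_dist_dist (z 1%N) (z 0%N).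
  have h3 := wn n; have h4' := wn 0%N.
  rewrite /B.
  move: h1 h2 => /ler_normlP [h1 h1'] /ler_normlP [h2 h2'].
  lra.
have [_ hz1] := hz 1%N; rewrite y1 in hz1.
have [_ hzn] := hz n.+1; rewrite yn in hzn.
have := hda1 (z 1%N) ltac:(lra); rewrite ltr_norml => /andP [k1a k1b].
have := hda2 (z 1%N) ltac:(lra); rewrite ltr_norml => /andP [k1c k1d].
have := hdb (z n.+1) ltac:(lra); rewrite ltr_norml => /andP [kna knb].
move: k1a k1b k1c k1d kna knb hch.
rewrite -/ha -/hb.
set k1 := g (z 1%N) / `|z 1%N|; set kn := g (z n.+1) / `|z n.+1|.
set u := B / (m / 2).
move=> k1a k1b k1c k1d kna knb hch.
have k10 : 0 <= k1 by rewrite /k1 divr_ge0.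
have u0 : 0 <= u by rewrite /u divr_ge0 // ltW.
have ue : u <= eps / (3 * K).
  rewrite /u ler_pdivrMr //; apply: le_trans Bc _.
  rewrite /c le_eqVlt; apply/orP; left; apply/eqP; field.
  by rewrite gt_eqF.
have hku : k1 * u <= K * (eps / (3 * K)).
  apply: ler_pM => //.
  rewrite /K; lra.
have eK : K * (eps / (3 * K)) = eps / 3 by field; rewrite gt_eqF.
rewrite eK in hku.
nra.
Qed.



Lemma dual_bound {R : realType} {X : normedModType R} (f : X -> R) :
  in_dual f -> dual_norm f = 1 -> forall u, f u <= `|u|.
Proof.
move=> [lin fc] n1.
have f0 : f 0 = 0.
  have := lin 1 0 0; rewrite scaler0 addr0 mul1r => e; lra.
have fZ : forall a u, f (a *: u) = a * f u.
  by move=> a u; have := lin a u 0; rewrite addr0 f0 addr0.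
have H : \forall v \near (0 : X), `|f 0 - f v| < 1.
  exact: (cvgrPdist_lt _ _).1 (fc 0) 1 ltr01.
have [d d0 hd] := (nbhs_normP _ _).1 H.
have bnd : forall v : X, `|v| <= 1 -> `|f v| <= 2 / d.
  move=> v hv.
  have hw : `|0 - (d / 2) *: v| < d.
    rewrite sub0r normrN normrZ ger0_norm ?divr_ge0 ?ltW //.
    have d2 : 0 <= d / 2 by rewrite divr_ge0 // ltW.
    have : d / 2 * `|v| <= d / 2 * 1 by rewrite ler_wpM2l.
    rewrite mulr1 => h; apply: le_lt_trans h _.
    by rewrite ltr_pdivrMr // ltr_pMr // ltr1n.
  have d2 : 0 <= d / 2 by rewrite divr_ge0 // ltW.
  have := hd _ hw; rewrite /= f0 sub0r normrN fZ normrM (ger0_norm d2).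
  move=> h; rewrite ler_pdivlMr // mulrC.
  have e : d / 2 * `|f v| * 2 = d * `|f v| by field.
  have h2 : d / 2 * `|f v| * 2 < 1 * 2 by rewrite ltr_pM2r.
  rewrite e mul1r in h2; exact: ltW h2.
have hub : has_ubound [set `|f x| | x in [set x : X | `|x| <= 1]].
  by exists (2 / d) => r [v hv <-]; exact: bnd.
move=> u; have [->|u0] := eqVneq u 0; first by rewrite f0 normr0.
have nu : 0 < `|u| by rewrite normr_gt0.
set v := `|u|^-1 *: u.
have nv : `|v| = 1 by rewrite /v normrZ ger0_norm ?invr_ge0 ?ltW // mulVf ?gt_eqF.
have : `|f v| <= 1.
  rewrite -n1; apply: (ub_le_sup hub); by exists v => //=; rewrite nv.
have iu : 0 <= `|u|^-1 by rewrite invr_ge0 ltW.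
rewrite /v fZ normrM (ger0_norm iu) => h.
have : `|f u| <= `|u|.
  by move: h; rewrite mulrC -ler_pdivlMr ?invr_gt0 // invrK mul1r.
move=> h'; apply: le_trans h'; exact: ler_norm.
Qed.

Lemma smooth_good {R : realType} {X : normedModType R} (T : {linear X -> X}) (x : X) :
  Sm x -> preserves_BJ_at T x -> exists F, goodF (fun u => `|T u|) x F.
Proof.
move=> [x0 [f hJ]] hP.
have : Jset x f by rewrite hJ.
move=> [hd [n1 fx]].
have hb := dual_bound _ hd n1.
have lin := hd.1.
exists f; split => //; split => //; split => //.
move=> u.
have nx : 0 < `|x| by rewrite normr_gt0.
set al := f u / `|x|.
have fue : f u = al * `|x| by rewrite /al divfK // gt_eqF.
set v := u - al *: x.
have fv : f v = 0.
  by rewrite /v addrC -scaleNr lin fx mulNr fue addNr.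
have BJ : BJorth x v.
  move=> lam; have e : f (x + lam *: v) = `|x|.
    by rewrite addrC lin fv mulr0 add0r fx.
  by rewrite -e; exact: hb.
have BJT := hP v BJ.
case: (eqVneq (f u) 0) => [fu0|fu0].
  by rewrite fu0 mulr0; apply: mulr_ge0.
have al0 : al != 0.
  by apply/eqP => a0; move/eqP: fu0; apply; rewrite fue a0 mul0r.
have := BJT al^-1.
have eT : T x + al^-1 *: T v = al^-1 *: T u.
  have -> : T u = al *: T x + T v by rewrite /v linearB linearZ /= addrC subrK.
  by rewrite scalerDr scalerA mulVf // scale1r.
rewrite eT normrZ normfV => h.
have nal : 0 < `|al| by rewrite normr_gt0.
have h2 : `|al| * `|T x| <= `|T u|.
  by rewrite mulrC -ler_pdivlMr // mulrC.
have h3 : al * `|T x| <= `|T u|.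
  have := ler_norm al; have := normr_ge0 (T x); nra.
rewrite fue; nra.
Qed.



Lemma global {R : realType} {X : normedModType R} (g : X -> R) (S : set X) :
  dense S -> (forall x, S x -> exists F, goodF g x F) -> (forall u, 0 <= g u) ->
  continuous g -> (forall (c : R) u, g (c *: u) = `|c| * g u) ->
  forall a b : X, a != 0 -> b != 0 -> g a / `|a| <= g b / `|b|.
Proof.
move=> hS hSF g0 gc gZ a b a0 b0.
have [[t [t0 t1 ht]]|nz] :=
  boolp.pselect (exists t : R, [/\ 0 <= t, t <= 1 & a + t *: (b - a) = 0]).
  have tn0 : t != 0.
    by apply/eqP => e; move: ht; rewrite e scale0r addr0; apply/eqP.
  have e1 : t *: b = - ((1 - t) *: a).
    apply/eqP; rewrite -addr_eq0; apply/eqP; rewrite -ht.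
    by rewrite scalerBr scalerBl scale1r addrCA.
  set c := - (t^-1 * (1 - t)).
  have eb : b = c *: a.
    by rewrite /c scaleNr -scalerA -scalerN -e1 scalerA mulVf // scale1r.
  have c0 : c != 0 by apply/eqP => e; move: b0; rewrite eb e scale0r eqxx.
  have nc : 0 < `|c| by rewrite normr_gt0.
  rewrite eb gZ normrZ le_eqVlt; apply/orP; left; apply/eqP; field.
  by rewrite normr_eq0 a0 gt_eqF.
pose phi := fun t : R => `|a + t *: (b - a)|.
have phic : {within `[0, 1], continuous phi}.
  apply: continuous_subspaceT => s.
  apply: (@continuous_comp _ _ _ (fun t : R => a + t *: (b - a)) (fun v : X => `|v|)).
    apply: cvgD; first exact: cvg_cst.
    exact: scalel_continuous.
  exact: norm_continuous.
have [t0 t0i ht0] := EVT_min ler01 phic.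
have m0 : 0 < phi t0.
  rewrite /phi normr_gt0; apply/negP => /eqP e; apply: nz; exists t0.
  by move: t0i; rewrite in_itv /= => /andP [h1 h2].
apply: (local hS hSF g0 gc a b (phi t0) m0) => t h0 h1.
by apply: ht0; rewrite in_itv /= h0 h1.
Qed.



Theorem mainTheorem6 (R : realType) (X : completeNormedModType R) :
  dense (@Sm R X) -> Gdelta (@Sm R X) ->
  forall T : {linear X -> X}, continuous T ->
  (forall x : X, Sm x -> preserves_BJ_at T x) ->
  exists2 lam : R, 0 <= lam & forall x : X, `|T x| = lam * `|x|.
Proof.
move=> hd _ T Tc hP.
pose g := fun u : X => `|T u|.
have g0 : forall u, 0 <= g u by move=> u; exact: normr_ge0.
have gc : continuous g.
  move=> x; apply: (@continuous_comp _ _ _ T (fun v : X => `|v|)); first exact: Tc.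
  exact: norm_continuous.
have gZ : forall (c : R) u, g (c *: u) = `|c| * g u.
  by move=> c u; rewrite /g linearZ normrZ.
have hS : forall x, Sm x -> exists F, goodF g x F.
  by move=> x hx; exact: (smooth_good T x hx (hP x hx)).
have Gl := global g Sm hd hS g0 gc gZ.
have [[x0 x00]|none] := boolp.pselect (exists x0 : X, x0 != 0).
  exists (g x0 / `|x0|); first by rewrite divr_ge0.
  move=> x; have [->|x0'] := eqVneq x 0; first by rewrite linear0 normr0 mulr0.
  have e : g x / `|x| = g x0 / `|x0|.
    by apply/eqP; rewrite eq_le !Gl.
  by rewrite -e divfK // normr_eq0.
exists 0 => // x; have [->|x0'] := eqVneq x 0; first by rewrite linear0 normr0 mulr0.
by exfalso; apply: none; exists x.
Qed.
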